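(* Let $f:(k+1)^V\to\mathbb{R}_{\ge0}$ be non-negative, monotone and $k$-submodular with all marginal values $\Delta_{e,j}f(S)\in[0,1]$, and let $F$ be its multilinear extension. Let $x\in\mathcal P$, $\mu_0=F(x)$, and let $R=(R_1,\dots,R_k)\in(k+1)^V$ be the random output of randomized swap rounding applied to $x$ (with any decomposition of $\bar x$ into bases). Then $\mathbb{E}[f(R)]\ge\mu_0$, and for every $\delta>0$, $$\Pr[f(R)\le(1-\delta)\mu_0]\le e^{-\mu_0\delta^2/8}.$$
   Context: Let $V=[n]=\{1,\dots,n\}$ and let $k\ge 1$ be an integer. Write $(k+1)^V$ for the set of $k$-tuples $S=(S_1,\dots,S_k)$ of pairwise disjoint subsets of $V$. For $S,T\in(k+1)^V$ let $S\sqcap T=(S_1\cap T_1,\dots,S_k\cap T_k)$ and let $S\sqcup T$ be the tuple whose $j$-th component is $(S_j\cup T_j)\setminus\bigcup_{l\neq j}(S_l\cup T_l)$. A function $f:(k+1)^V\to\mathbb{R}$ is $k$-submodular if $f(S)+f(T)\ge f(S\sqcap T)+f(S\sqcup T)$ for all $S,T\in(k+1)^V$. Write $S\preceq T$ if $S_j\subseteq T_j$ for all $j$; $f$ is monotone if $S\preceq T$ implies $f(S)\le f(T)$. For $e\notin\bigcup_l S_l$ and $j\in[k]$, $\Delta_{e,j}f(S)=f(S_1,\dots,S_{j-1},S_j\cup\{e\},S_{j+1},\dots,S_k)-f(S)$. Let $\mathcal P=\{x\in[0,1]^{n\times k}:\sum_{j=1}^k x_{i,j}\le 1\ \forall i\in[n]\}$.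 The multilinear extension of $f$ is the polynomial $F(x)=\sum_{S\in(k+1)^V} f(S_1,\dots,S_k)\Big(\prod_{j\in[k]}\prod_{i\in S_j}x_{i,j}\Big)\prod_{i\in V\setminus\bigcup_j S_j}\Big(1-\sum_{j=1}^k x_{i,j}\Big)$, considered on $\mathcal P$. Randomized swap rounding: let $E=[n]\times\{0,1,\dots,k\}$ and call $C\subseteq E$ a base if it contains exactly one element of each row $\{i\}\times\{0,\dots,k\}$ (bases of a partition matroid). For $x\in\mathcal P$ let $\bar x\in[0,1]^E$ be given by $\bar x_{i,j}=x_{i,j}$ for $j\ge1$ and $\bar x_{i,0}=1-\sum_{j\ge1}x_{i,j}$. Write $\bar x=\sum_{l=1}^m\beta_l\mathbf 1_{B_l}$ with $\beta_l>0$, $\sum_l\beta_l=1$, $B_l$ bases. Set $C_1=B_1$, $\gamma_1=\beta_1$. For $l=1,\dots,m-1$, merge $C_l$ (weight $\gamma_l$) with $B_{l+1}$ (weight $\beta_{l+1}$): with $C=C_l$, $B=B_{l+1}$, while $C\neq B$ pick a row $i$ where they differ, with $c\in C\setminus B$ and $b\in B\setminus C$ the elements of row $i$; with probability $\gamma_l/(\gamma_l+\beta_{l+1})$ replace $B$ by $B-b+c$, otherwise replace $C$ by $C-c+b$ (the choice of row may depend on the history). When $C=B$, set $C_{l+1}=C$ and $\gamma_{l+1}=\gamma_l+\beta_{l+1}$. The output is $R=(R_1,\dots,R_k)$ with $R_j=\{i:(i,j)\in C_m\}$. *)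

(* Defs.v *)
From HB Require Import structures.
From mathcomp Require Import all_boot all_order all_algebra.
From mathcomp Require Import reals sequences exp.
Set Implicit Arguments. Unset Strict Implicit. Unset Printing Implicit Defensive.
Import Order.TTheory GRing.Theory Num.Theory.
Local Open Scope ring_scope.

(* V = [n] is encoded as 'I_n.  An element S = (S_1,...,S_k) of
   (k+1)^V (k-tuple of pairwise disjoint subsets of V) is encoded by the map
   s : 'I_n -> 'I_k.+1 with  s i = 0 if i is in no S_j, and s i = j (as the
   ordinal lift ord0 j', j' : 'I_k, i.e. value j'+1) if i \in S_{j'+1}. *)
Definition orth (n k : nat) := {ffun 'I_n -> 'I_k.+1}.

(* the j-th component S_j (j : 'I_k, meaning component j+1) *)
Definition comp n k (S : orth n k) (j : 'I_k) : {set 'I_n} :=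
  [set i | S i == lift ord0 j].

Definition unassigned n k (S : orth n k) : {set 'I_n} := [set i | S i == ord0].

Definition omeet n k (S T : orth n k) : orth n k :=
  [ffun i => if S i == T i then S i else ord0].

(* S ⊔ T : j-th comp = (S_j ∪ T_j) \ U_{l<>j} (S_l ∪ T_l) *)
Definition ojoin n k (S T : orth n k) : orth n k :=
  [ffun i => if S i == ord0 then T i
             else if T i == ord0 then S i
             else if S i == T i then S i else ord0].

Definition k_submodular (R : realType) n k (f : orth n k -> R) : Prop :=
  forall S T : orth n k, f (omeet S T) + f (ojoin S T) <= f S + f T.

Definition ole n k (S T : orth n k) : Prop :=
  forall j : 'I_k, comp S j \subset comp T j.

Definition monotone (R : realType) n k (f : orth n k -> R) : Prop :=
  forall S T : orth n k, ole S T -> f S <= f T.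

Definition upd n k (S : orth n k) (e : 'I_n) (v : 'I_k.+1) : orth n k :=
  [ffun i => if i == e then v else S i].

(* Δ_{e,j} f(S), defined for e unassigned in S *)
Definition marginal (R : realType) n k (f : orth n k -> R) (e : 'I_n) (j : 'I_k)
  (S : orth n k) : R := f (upd S e (lift ord0 j)) - f S.

Definition in_P (R : realType) n k (x : 'M[R]_(n, k)) : Prop :=
  (forall i j, 0 <= x i j <= 1) /\ (forall i, \sum_(j < k) x i j <= 1).

Definition multilinear_ext (R : realType) n k (f : orth n k -> R)
  (x : 'M[R]_(n, k)) : R :=
  \sum_(S : orth n k)
     f S * ((\prod_(j < k) \prod_(i in comp S j) x i j) *
            \prod_(i in unassigned S) (1 - \sum_(j < k) x i j)).

(* E = [n] x {0..k}; a base (one element per row) is encoded as a map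
   'I_n -> 'I_k.+1 (row i contains (i, C i)); it is thus also of type orth n k,
   and the output R_j = {i : (i,j) in C_m} is exactly this map. *)
Definition base n k := orth n k.

Definition xbar (R : realType) n k (x : 'M[R]_(n, k)) (i : 'I_n) (c : 'I_k.+1) : R :=
  match unlift ord0 c with
  | Some j => x i j
  | None => 1 - \sum_(j < k) x i j
  end.

Definition is_decomposition (R : realType) n k (x : 'M[R]_(n, k))
  (dec : seq (R * base n k)) : Prop :=
  [/\ dec != [::],
      all (fun p => 0 < p.1) dec,
      \sum_(p <- dec) p.1 = 1 &
      forall i c, xbar x i c = \sum_(p <- dec) p.1 * (p.2 i == c)%:R].

(* finitely supported probability distributions over outcomes, given by their
   mass functions *)
Definition dist (R : realType) n k := {ffun orth n k -> R}.
Definition dirac (R : realType) n k (C : orth n k) : dist R n k :=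
  [ffun S => (S == C)%:R].
Definition mix (R : realType) n k (p : R) (d1 d2 : dist R n k) : dist R n k :=
  [ffun S => p * d1 S + (1 - p) * d2 S].

(* swap_idle g C rest d : the current merged base is C with weight g, the
   bases still to be merged are rest; d is a possible distribution of the final
   output.
   swap_merging g C b B rest d : currently merging C (weight g) with B (weight b).
   Each swap step picks ANY row i on which C and B differ (independently at each
   node of the execution tree, hence allowing arbitrary history-dependent row
   choices); with prob. g/(g+b) B := B - b + c, otherwise C := C - c + b. *)
Inductive swap_idle (R : realType) (n k : nat) :
    R -> base n k -> seq (R * base n k) -> dist R n k -> Prop :=
| swap_done (g : R) (C : base n k) : swap_idle g C [::] (dirac R C)
| swap_next (g : R) (C : base n k) (b : R) (B : base n k)
    (rest : seq (R * base n k)) (d : dist R n k) :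
    swap_merging g C b B rest d -> swap_idle g C ((b, B) :: rest) d
with swap_merging (R : realType) (n k : nat) :
    R -> base n k -> R -> base n k -> seq (R * base n k) -> dist R n k -> Prop :=
| swap_merged (g : R) (C : base n k) (b : R) (rest : seq (R * base n k))
    (d : dist R n k) :
    swap_idle (g + b) C rest d -> swap_merging g C b C rest d
| swap_step (g : R) (C : base n k) (b : R) (B : base n k)
    (rest : seq (R * base n k)) (i : 'I_n) (d1 d2 : dist R n k) :
    C i != B i ->
    swap_merging g C b (upd B i (C i)) rest d1 ->
    swap_merging g (upd C i (B i)) b B rest d2 ->
    swap_merging g C b B rest (mix (g / (g + b)) d1 d2).

Definition swap_rounding_dist (R : realType) n k (dec : seq (R * base n k))
  (d : dist R n k) : Prop :=
  match dec with
  | [::] => False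
  | (b1, B1) :: rest => swap_idle b1 B1 rest d
  end.

Definition expectation (R : realType) n k (d : dist R n k) (g : orth n k -> R) : R :=
  \sum_(S : orth n k) d S * g S.

Definition prob (R : realType) n k (d : dist R n k) (P : pred (orth n k)) : R :=
  \sum_(S : orth n k | P S) d S.

(* Main.v *)
Require Import Defs.
From HB Require Import structures.
From mathcomp Require Import all_boot all_order all_algebra.
From mathcomp Require Import reals sequences exp.
From mathcomp Require Import ring lra.
Set Implicit Arguments. Unset Strict Implicit. Unset Printing Implicit Defensive.
Import Order.TTheory GRing.Theory Num.Theory.
Local Open Scope ring_scope.



Definition ML (R : realType) n k (g : orth n k -> R) (y : 'I_n -> 'I_k.+1 -> R) : R :=
  \sum_(S : orth n k) g S * \prod_(i < n) y i (S i).

Lemma ML_ext (R : realType) n k (g : orth n k -> R) y y' :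
  (forall i c, y i c = y' i c) -> ML g y = ML g y'.
Proof.
move=> H; apply: eq_bigr => S _; congr (_ * _); apply: eq_bigr => i _; exact: H.
Qed.

Definition setrow (R : realType) n k (y : 'I_n -> 'I_k.+1 -> R) (t : 'I_n) (c : 'I_k.+1) :=
  fun i c' => if i == t then (c == c')%:R else y i c'.

Lemma ML_split (R : realType) n k (g : orth n k -> R) y t :
  ML g y = \sum_(c < k.+1) y t c * ML g (setrow y t c).
Proof.
rewrite /ML.
under [RHS]eq_bigr do rewrite mulr_sumr.
rewrite exchange_big /=; apply: eq_bigr => S _.
rewrite (bigD1 t (P := predT)) //=.
under [RHS]eq_bigr do rewrite (bigD1 t (P := predT)) //= /setrow eqxx.
have E : forall c, \prod_(i < n | i != t) (if i == t then (c == S i)%:R else y i (S i))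
   = \prod_(i < n | i != t) y i (S i).
  by move=> c; apply: eq_bigr => i /negbTE ->.
under [RHS]eq_bigr do rewrite E.
rewrite [RHS](bigD1 (S t) (P := predT)) //= eqxx [X in _ = _ + X]big1 ?addr0.
  by rewrite mul1r; ring.
by move=> c /negbTE ->; rewrite mul0r mulr0 mulr0.
Qed.

Lemma ML_row (R : realType) n k (g : orth n k -> R) (i : 'I_n) y y1 y2 (p : R) :
  (forall j, j != i -> forall c, y1 j c = y j c /\ y2 j c = y j c) ->
  (forall c, y i c = p * y1 i c + (1 - p) * y2 i c) ->
  ML g y = p * ML g y1 + (1 - p) * ML g y2.
Proof.
move=> Ho Hi.
rewrite (ML_split g y i) (ML_split g y1 i) (ML_split g y2 i).
have E1 : forall c, ML g (setrow y1 i c) = ML g (setrow y i c).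
  move=> c; apply: ML_ext => j c'; rewrite /setrow; case: eqP => // /eqP ji.
  by case: (Ho j ji c').
have E2 : forall c, ML g (setrow y2 i c) = ML g (setrow y i c).
  move=> c; apply: ML_ext => j c'; rewrite /setrow; case: eqP => // /eqP ji.
  by case: (Ho j ji c').
under [in RHS]eq_bigr do rewrite E1.
under [X in _ = _ + _ * X]eq_bigr do rewrite E2.
rewrite !mulr_sumr -big_split /=; apply: eq_bigr => c _; rewrite Hi; ring.
Qed.

Lemma ML_dirac (R : realType) n k (g : orth n k -> R) (C : orth n k) :
  ML g (fun i c => (C i == c)%:R) = g C.
Proof.
rewrite /ML (bigD1 C (P := predT)) //= [X in _ + X]big1 ?addr0.
  by rewrite big1 ?mulr1 // => i _; rewrite eqxx.
move=> S SC.
have [i Hi] : exists i, C i != S i.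
  apply/existsP; apply: contraNT SC => /existsPn H.
  by apply/eqP/ffunP => i; move: (H i); rewrite negbK => /eqP.
by rewrite (bigD1 i) //= (negbTE Hi) mul0r mulr0.
Qed.



Definition pt (R : realType) n k (l : seq (R * base n k)) (i : 'I_n) (c : 'I_k.+1) : R :=
  \sum_(p <- l) p.1 * (p.2 i == c)%:R.

Scheme swap_idle_min := Minimality for swap_idle Sort Prop
with swap_merging_min := Minimality for swap_merging Sort Prop.

Lemma exp_dirac (R : realType) n k (C : orth n k) (h : orth n k -> R) :
  expectation (dirac R C) h = h C.
Proof.
rewrite /expectation (bigD1 C (P := predT)) //= ffunE eqxx mul1r big1 ?addr0 //.
by move=> S /negbTE SC; rewrite ffunE SC mul0r.
Qed.

Lemma exp_mix (R : realType) n k (p : R) (d1 d2 : dist R n k) (h : orth n k -> R) :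
  expectation (mix p d1 d2) h = p * expectation d1 h + (1 - p) * expectation d2 h.
Proof.
rewrite /expectation !mulr_sumr -big_split /=; apply: eq_bigr => S _.
rewrite ffunE; ring.
Qed.

Definition Pidle (R : realType) n k (g : R) (C : base n k) (rest : seq (R * base n k))
  (d : dist R n k) : Prop :=
  0 < g -> all (fun p => 0 < p.1) rest -> g + \sum_(p <- rest) p.1 = 1 ->
  (forall S, 0 <= d S) /\ (forall h, expectation d h = ML h (pt ((g, C) :: rest))).

Definition Pmerge (R : realType) n k (g : R) (C : base n k) (b : R) (B : base n k)
  (rest : seq (R * base n k)) (d : dist R n k) : Prop :=
  0 < g -> 0 < b -> all (fun p => 0 < p.1) rest -> g + b + \sum_(p <- rest) p.1 = 1 ->
  (forall S, 0 <= d S) /\ (forall h, expectation d h = ML h (pt ((g, C) :: (b, B) :: rest))).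

Lemma swap_inv (R : realType) n k g C rest (d : dist R n k) :
  swap_idle g C rest d -> Pidle g C rest d.
Proof.
apply: (@swap_idle_min R n k (@Pidle R n k) (@Pmerge R n k)).
- move=> g0 C0 g0p _; rewrite big_nil addr0 => g1; split.
    by move=> S; rewrite ffunE ler0n.
  move=> h; rewrite exp_dirac -[LHS](ML_dirac h C0); apply: ML_ext => i c.
  by rewrite /pt big_cons big_nil addr0 g1 mul1r.
- move=> g0 C0 b B rest0 d0 _ IH g0p /andP[bp rp] s1.
  apply: IH => //.
  by rewrite -addrA -s1 big_cons.
- move=> g0 C0 b rest0 d0 _ IH g0p bp rp s1.
  have [H1 H2] := IH (addr_gt0 g0p bp) rp s1.
  split => // h; rewrite H2; apply: ML_ext => i c.
  rewrite /pt !big_cons /=; ring.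
- move=> g0 C0 b B rest0 i d1 d2 CB _ IH1 _ IH2 g0p bp rp s1.
  have [N1 E1] := IH1 g0p bp rp s1.
  have [N2 E2] := IH2 g0p bp rp s1.
  have gb : 0 < g0 + b by exact: addr_gt0.
  have gbn : g0 + b != 0 by rewrite gt_eqF.
  have p0 : 0 <= g0 / (g0 + b) by rewrite divr_ge0 // ltW.
  have p1 : 0 <= 1 - g0 / (g0 + b).
    by rewrite subr_ge0 ler_pdivrMr // mul1r lerDl ltW.
  split.
    by move=> S; rewrite ffunE addr_ge0 // mulr_ge0.
  move=> h; rewrite exp_mix E1 E2.
  symmetry.
  apply: (@ML_row _ _ _ h i).
    move=> j ji c; rewrite /pt !big_cons /= !ffunE (negbTE ji); split => //.
  move=> c; rewrite /pt !big_cons /= !ffunE eqxx.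
  field; exact: gbn.
Qed.



Lemma expN_le (R : realType) (lam cc u : R) :
  0 <= lam -> 0 <= cc -> cc * (1 + lam) = lam -> 0 <= u -> u <= 1 ->
  expR (- (lam * u)) <= 1 - cc * u.
Proof.
move=> l0 c0 ce u0 u1.
have EG : expR (- (lam * u)) * expR (lam * u) = 1.
  by rewrite -expRD addNr expR0.
have Ep : 0 < expR (- (lam * u)) := expR_gt0 _.
have G1 : 1 + lam * u <= expR (lam * u) := expR_ge1Dx _.
have A0 : 0 <= 1 - cc * u.
  have : cc <= 1 by nra.
  nra.
have A1 : 1 <= (1 - cc * u) * (1 + lam * u).
  have : 0 <= cc * lam * u * (1 - u) by rewrite !mulr_ge0 // subr_ge0.
  nra.
have : (1 - cc * u) * (1 + lam * u) <= (1 - cc * u) * expR (lam * u).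
  by apply: ler_wpM2l.
nra.
Qed.

Lemma key (R : realType) k (p H Fv : 'I_k.+1 -> R) (h0 f0 lam cc : R) :
  0 <= lam -> 0 <= cc -> cc * (1 + lam) = lam ->
  (forall c, 0 <= p c) -> \sum_c p c = 1 ->
  (forall c, 0 <= H c - h0) -> (forall c, H c - h0 <= Fv c - f0) ->
  (forall c, Fv c - f0 <= 1) ->
  \sum_c p c * expR (- cc * H c + (cc - lam) * Fv c)
    <= expR (- cc * (\sum_c p c * H c) + (cc - lam) * f0).
Proof.
move=> l0 c0 ce p0 p1 Hu Huw Hw.
set E0 := expR (- cc * h0 + (cc - lam) * f0).
have E0p : 0 < E0 := expR_gt0 _.
have clam : cc <= lam by nra.
have step : forall c, expR (- cc * H c + (cc - lam) * Fv c)
                      <= E0 * (1 - cc * (H c - h0)).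
  move=> c.
  have -> : - cc * H c + (cc - lam) * Fv c =
            (- cc * h0 + (cc - lam) * f0) + (- cc * (H c - h0) + (cc - lam) * (Fv c - f0)).
    by ring.
  rewrite expRD; apply: ler_wpM2l; first exact: ltW.
  apply: le_trans (expN_le l0 c0 ce (Hu c) (le_trans (Huw c) (Hw c))).
  rewrite ler_expR.
  have := Huw c; have := Hu c; nra.
apply: le_trans (_ : \sum_c p c * (E0 * (1 - cc * (H c - h0))) <= _).
  by apply: ler_sum => c _; apply: ler_wpM2l.
rewrite (eq_bigr (fun c => E0 * p c - E0 * cc * (p c * H c) + E0 * cc * h0 * p c));
  last by move=> c _; ring.
rewrite big_split sumrB /= -!mulr_sumr p1.
have -> : - cc * (\sum_c p c * H c) + (cc - lam) * f0 =
          (- cc * h0 + (cc - lam) * f0) + (- (cc * (\sum_c p c * H c - h0))) by ring.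
rewrite expRD -/E0.
have := expR_ge1Dx (- (cc * (\sum_c p c * H c - h0))).
set X := expR _ => HX.
have : E0 * (1 - cc * (\sum_c p c * H c - h0)) <= E0 * X.
  by apply: ler_wpM2l; [exact: ltW| lra].
lra.
Qed.



Definition yQT (R : realType) n k (x : 'M[R]_(n, k)) (Q : {set 'I_n}) (T : orth n k) :=
  fun i c => if i \in Q then xbar x i c else (T i == c)%:R.

Lemma updE n k (S : orth n k) e v i : upd S e v i = if i == e then v else S i.
Proof. by rewrite ffunE. Qed.

Lemma upd_id n k (S : orth n k) t : S t = ord0 -> upd S t ord0 = S.
Proof. by move=> St; apply/ffunP => i; rewrite updE; case: eqP => // ->. Qed.

Lemma upd_comm n k (T : orth n k) s t a b : s != t ->
  upd (upd T s a) t b = upd (upd T t b) s a.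
Proof.
move=> st; apply/ffunP => i; rewrite !updE.
case: (eqVneq i t) => [->|it]; first by rewrite eq_sym (negbTE st).
done.
Qed.

Lemma ML_yQT_split (R : realType) n k (x : 'M[R]_(n, k)) (g : orth n k -> R) (Q : {set 'I_n}) (T : orth n k) (t : 'I_n) : t \in Q ->
  ML g (yQT x Q T) = \sum_c xbar x t c * ML g (yQT x (Q :\ t) (upd T t c)).
Proof.
move=> tQ; rewrite (ML_split g _ t); apply: eq_bigr => c _.
rewrite /yQT tQ; congr (_ * _); apply: ML_ext => i c'.
rewrite /setrow in_setD1 updE; case: (eqVneq i t) => // _.
Qed.

Lemma ML_yQT0 (R : realType) n k (x : 'M[R]_(n, k)) (g : orth n k -> R) (T : orth n k) :
  ML g (yQT x set0 T) = g T.
Proof.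
rewrite -(ML_dirac g T); apply: ML_ext => i c; by rewrite /yQT in_set0.
Qed.

Lemma xbar_ge0 (R : realType) n k (x : 'M[R]_(n, k)) i c : in_P x -> 0 <= xbar x i c.
Proof.
case=> H1 H2; rewrite /xbar; case: (unliftP ord0 c) => [j _|_].
  by case/andP: (H1 i j).
by rewrite subr_ge0.
Qed.

Lemma xbar_sum (R : realType) n k (x : 'M[R]_(n, k)) i : \sum_c xbar x i c = 1.
Proof.
rewrite big_ord_recl /xbar unlift_none.
under [X in _ + X = _]eq_bigr do rewrite liftK.
by rewrite subrK.
Qed.

Lemma DR (R : realType) n k (f : orth n k -> R) (S T : orth n k) t c :
  k_submodular f -> (forall i, T i != ord0 -> S i = T i) -> S t = ord0 ->
  f (upd S t c) - f S <= f (upd T t c) - f T.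
Proof.
move=> ks TS St.
have Tt : T t = ord0.
  by case: (eqVneq (T t) ord0) => // /TS; rewrite St => ->.
case: (unliftP ord0 c) => [j ->|->]; last by rewrite !upd_id // !subrr.
have cne : lift ord0 j != ord0 :> 'I_k.+1 by rewrite eq_sym; apply: neq_lift.
have M : omeet (upd T t (lift ord0 j)) S = T.
  apply/ffunP => i; rewrite ffunE updE.
  case: (eqVneq i t) => [->|it].
    by rewrite St (negbTE cne) Tt.
  case: (eqVneq (T i) ord0) => [Ti|Ti]; first by rewrite Ti; case: eqP.
  by rewrite (TS i Ti) eqxx.
have J : ojoin (upd T t (lift ord0 j)) S = upd S t (lift ord0 j).
  apply/ffunP => i; rewrite !ffunE.
  case: (eqVneq i t) => [->|it].
    by rewrite (negbTE cne) St eqxx.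
  case: (eqVneq (T i) ord0) => [Ti|Ti] //.
  rewrite (TS i Ti) (negbTE Ti) eqxx; done.
have := ks (upd T t (lift ord0 j)) S; rewrite M J; lra.
Qed.



Lemma conv_bound (R : realType) k (p D : 'I_k.+1 -> R) (W : R) :
  (forall c, 0 <= p c) -> \sum_c p c = 1 -> (forall c, 0 <= D c <= W) ->
  0 <= \sum_c p c * D c <= W.
Proof.
move=> p0 p1 HD; apply/andP; split.
  by apply: sumr_ge0 => c _; case/andP: (HD c) => D0 _; rewrite mulr_ge0.
apply: le_trans (_ : \sum_c p c * W <= _).
  by apply: ler_sum => c _; case/andP: (HD c) => _ DW; rewrite ler_wpM2l.
by rewrite -mulr_suml p1 mul1r.
Qed.

Definition marg_hyp (R : realType) n k (f : orth n k -> R) :=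
  forall (S : orth n k) (e : 'I_n) (j : 'I_k), S e = ord0 -> 0 <= marginal f e j S <= 1.

Lemma marg_all (R : realType) n k (f : orth n k -> R) (T : orth n k) t c :
  marg_hyp f -> T t = ord0 -> 0 <= f (upd T t c) - f T <= 1.
Proof.
move=> mh Tt; case: (unliftP ord0 c) => [j ->|->]; first exact: mh.
by rewrite upd_id // subrr lexx ler01.
Qed.

Lemma Mono (R : realType) n k (x : 'M[R]_(n, k)) (f : orth n k -> R) :
  in_P x -> k_submodular f -> marg_hyp f ->
  forall m (Q : {set 'I_n}) (T : orth n k) t c, #|Q| = m -> t \notin Q ->
  (forall i, i \in Q -> T i = ord0) -> T t = ord0 ->
  0 <= ML f (yQT x Q (upd T t c)) - ML f (yQT x Q T) <= f (upd T t c) - f T.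
Proof.
move=> xP ks mh; elim=> [|m IH] Q T t c.
  move=> /eqP; rewrite cards_eq0 => /eqP -> _ _ Tt.
  rewrite !ML_yQT0 lexx andbT.
  by case/andP: (marg_all c mh Tt).
move=> cQ tQ TQ Tt.
have /card_gt0P [s sQ] : (0 < #|Q|)%N by rewrite cQ.
have st : s != t by apply: contraNneq tQ => <-.
rewrite !(ML_yQT_split _ _ _ sQ) -sumrB.
rewrite (eq_bigr (fun a => xbar x s a * (ML f (yQT x (Q :\ s) (upd (upd T s a) t c))
                   - ML f (yQT x (Q :\ s) (upd T s a))))); last first.
  by move=> a _; rewrite (@upd_comm _ _ T t s c a) 1?eq_sym // mulrBr.
apply: conv_bound.
- by move=> a; exact: xbar_ge0.
- exact: xbar_sum.
move=> a.
have Ta : (upd T s a) t = ord0 by rewrite updE eq_sym (negbTE st).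
have cQ' : #|Q :\ s| = m by move: cQ; rewrite (cardsD1 s) sQ add1n => -[].
have tQ' : t \notin Q :\ s by rewrite in_setD1 negb_and tQ orbT.
have TQ' : forall i, i \in Q :\ s -> upd T s a i = ord0.
  by move=> i; rewrite in_setD1 => /andP[iS iQ]; rewrite updE (negbTE iS) TQ.
case/andP: (IH _ _ _ c cQ' tQ' TQ' Ta) => -> /le_trans; apply.
apply: DR => //.
move=> i Ti; rewrite updE; case: eqP => // iS.
by move: Ti; rewrite iS TQ // eqxx.
Qed.



Lemma Ch (R : realType) n k (x : 'M[R]_(n, k)) (f : orth n k -> R) (lam cc : R) :
  in_P x -> k_submodular f -> marg_hyp f ->
  0 <= lam -> 0 <= cc -> cc * (1 + lam) = lam ->
  forall m (Q : {set 'I_n}) (T : orth n k), #|Q| = m ->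
  (forall i, i \in Q -> T i = ord0) ->
  ML (fun S => expR (- lam * f S)) (yQT x Q T)
    <= expR (- cc * ML f (yQT x Q T) + (cc - lam) * f T).
Proof.
move=> xP ks mh l0 c0 ce; elim=> [|m IH] Q T.
  move=> /eqP; rewrite cards_eq0 => /eqP -> _.
  by rewrite !ML_yQT0 ler_expR; lra.
move=> cQ TQ.
have /card_gt0P [t tQ] : (0 < #|Q|)%N by rewrite cQ.
have cQ' : #|Q :\ t| = m by move: cQ; rewrite (cardsD1 t) tQ add1n => -[].
have tQ' : t \notin Q :\ t by rewrite in_setD1 eqxx.
have Tt : T t = ord0 by exact: TQ.
have TQ' : forall c i, i \in Q :\ t -> upd T t c i = ord0.
  by move=> c i; rewrite in_setD1 => /andP[it iQ]; rewrite updE (negbTE it) TQ.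
have TQ0 : forall i, i \in Q :\ t -> T i = ord0.
  by move=> i; rewrite in_setD1 => /andP[_ iQ]; exact: TQ.
rewrite !(ML_yQT_split _ _ _ tQ).
apply: le_trans (_ : \sum_c xbar x t c *
    expR (- cc * ML f (yQT x (Q :\ t) (upd T t c)) + (cc - lam) * f (upd T t c)) <= _).
  apply: ler_sum => c _; apply: ler_wpM2l; first exact: xbar_ge0.
  exact: (IH _ _ cQ' (TQ' c)).
apply: (key (p := xbar x t) (H := fun c => ML f (yQT x (Q :\ t) (upd T t c)))
           (Fv := fun c => f (upd T t c)) (h0 := ML f (yQT x (Q :\ t) T)) (f0 := f T)) => //.
- by move=> c; exact: xbar_ge0.
- exact: xbar_sum.
- by move=> c; case/andP: (Mono xP ks mh c cQ' tQ' TQ0 Tt).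
- by move=> c; case/andP: (Mono xP ks mh c cQ' tQ' TQ0 Tt).
- by move=> c; case/andP: (marg_all c mh Tt).
Qed.



Lemma MLE (R : realType) n k (f : orth n k -> R) (x : 'M[R]_(n, k)) :
  multilinear_ext f x = ML f (xbar x).
Proof.
rewrite /multilinear_ext /ML; apply: eq_bigr => S _; congr (_ * _).
rewrite [RHS](partition_big (fun i : 'I_n => S i) (fun _ => true)) //= big_ord_recl mulrC.
congr (_ * _).
  apply: eq_big => [i|i]; first by rewrite in_set.
  by rewrite in_set => /eqP Si; rewrite Si /xbar unlift_none.
apply: eq_bigr => j _; apply: eq_big => [i|i]; first by rewrite in_set.
by rewrite in_set => /eqP Si; rewrite Si /xbar liftK.
Qed.

Unset Implicit Arguments.

Theorem mainTheorem9 (R : realType) (n k : nat) (f : orth n k -> R)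
  (x : 'M[R]_(n, k)) (dec : seq (R * base n k)) (d : dist R n k) :
  (1 <= k)%N ->
  (forall S, 0 <= f S) ->
  monotone f ->
  k_submodular f ->
  (forall (S : orth n k) (e : 'I_n) (j : 'I_k), S e = ord0 ->
      0 <= marginal f e j S <= 1) ->
  in_P x ->
  is_decomposition x dec ->
  swap_rounding_dist dec d ->
  let mu0 := multilinear_ext f x in
  mu0 <= expectation d f /\
  (forall delta : R, 0 < delta ->
     prob d (fun S => f S <= (1 - delta) * mu0)
       <= expR (- (mu0 * delta ^+ 2 / 8))).
Proof.
move=> _ f0 _ ks mh xP dec_ok sw mu0.
have [dnn dexp] : (forall S, 0 <= d S) /\ forall h, expectation d h = ML h (xbar x).
  move: dec_ok sw; case: dec => [//|[b1 B1] rest] [_ /andP[b1p rp] s1 xd] /= sw.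
  have s1' : b1 + \sum_(p <- rest) p.1 = 1 by rewrite -s1 big_cons.
  have [N E] := swap_inv sw b1p rp s1'.
  split => // h; rewrite E; apply: ML_ext => i c; by rewrite xd.
have mueq : mu0 = expectation d f by rewrite /mu0 MLE dexp.
have mu_ge0 : 0 <= mu0.
  by rewrite mueq; apply: sumr_ge0 => S _; rewrite mulr_ge0.
split; first by rewrite mueq.
move=> delta dp.
set lam := delta / 2.
set cc := lam / (1 + lam).
have l0 : 0 <= lam by rewrite /lam divr_ge0 // ltW.
have c0 : 0 <= cc by rewrite /cc divr_ge0 // addr_ge0.
have ce : cc * (1 + lam) = lam.
  have lp : 0 < 1 + lam by lra.
  by rewrite /cc mulfVK // gt_eqF.
set Z : orth n k := [ffun => ord0].
have yT : forall g, ML g (xbar x) = ML g (yQT x setT Z).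
  by move=> g; apply: ML_ext => i c; rewrite /yQT in_setT.
have Hch := Ch xP ks mh l0 c0 ce (erefl #|[set: 'I_n]|) (fun i _ => ffunE _ i).
rewrite -!yT -!dexp -mueq in Hch.
set a := (1 - delta) * mu0.
apply: le_trans (_ : \sum_S d S * (expR (lam * a) * expR (- lam * f S)) <= _).
  rewrite /prob big_mkcond /=; apply: ler_sum => S _.
  case: ifP => HS.
    rewrite -{1}(mulr1 (d S)); apply: ler_wpM2l => //.
    rewrite -expRD -(expR0 R) ler_expR.
    have : 0 <= lam * (a - f S) by rewrite mulr_ge0 // subr_ge0.
    lra.
  by rewrite mulr_ge0 // mulr_ge0 // expR_ge0.
have -> : \sum_S d S * (expR (lam * a) * expR (- lam * f S))
          = expR (lam * a) * expectation d (fun S => expR (- lam * f S)).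
  by rewrite /expectation mulr_sumr; apply: eq_bigr => S _; ring.
apply: le_trans (_ : expR (lam * a) * expR (- cc * mu0) <= _).
  apply: ler_wpM2l; first exact: expR_ge0.
  apply: le_trans Hch _; rewrite ler_expR.
  have : cc <= lam by nra.
  have := f0 Z; nra.
rewrite -expRD ler_expR /a /lam.
have clam : cc <= lam by nra.
have H1 : (lam - lam ^+ 2) * mu0 <= cc * mu0.
  apply: ler_wpM2r => //; nra.
move: H1; rewrite /lam; nra.
Qed.
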